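(* Let $T_{init}$ be the number of nodes of the initial tree. The expected optimization time of (1+1) GP-single on MO-WORDER is $O(T_{init}+n\log n)$.
   Context: Fix an integer $n\ge 1$ and real weights $w_1\ge w_2\ge\dots\ge w_n>0$. The terminal set is $T=\{x_1,\bar x_1,\dots,x_n,\bar x_n\}$ ($\bar x_i$ is the complement of $x_i$; $x_i$ is called positive). A syntax tree is either the empty tree or a rooted ordered binary tree whose inner nodes are all labelled by the binary function $J$ (join, exactly two ordered children) and whose leaves are labelled by elements of $T$. The complexity $C(X)$ is the number of nodes of $X$ (0 for the empty tree). The leaf list $l$ of $X$ is the sequence of leaf labels in an inorder traversal. WORDER: build a list $S$ by scanning $l$ from front to rear and appending a literal only if neither it nor its complement is already in $S$; WORDER$(X)=\sum_{i:\,x_i\in S} w_i$. MO-WORDER$(X)=(\mathrm{WORDER}(X),C(X))$, WORDER to be maximized and $C$ minimized. Mutation (HVL-Prime applied $k$ times): each application chooses uniformly at random one of three operations. Substitute: replace a uniformly random leaf by a uniformly random $u\in T$. Insert: choose a uniformly random node $v$ and uniformly random $u\in T$, replace $v$ by a $J$-node with children $u$ and $v$ in uniformly random order (inserting into the empty tree yields the single leaf $u$). Delete: choose a uniformly random leaf $v$ with parent $p$ and sibling $u$, replace $p$ by $u$ (deleting $p$ and $v$; deleting the only leaf of a one-leaf tree yields the empty tree). Single-operation mutation uses $k=1$. (1+1) GP-single on MO-$F$: start with an initial tree $X$; in each iteration let $Y$ be $X$ mutated with $k=1$, and set $X:=Y$ iff $F(Y)>F(X)$, or $F(Y)=F(X)$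 and $C(Y)\le C(X)$. Expected optimization time: expected number of iterations (fitness evaluations) until the current solution is for the first time optimal, i.e. has maximum possible $F$-value and, among such trees, minimum complexity. *)

(* Defs.v *)
From Stdlib Require Import Reals Lra Lia Arith List Bool ClassicalEpsilon.
Import ListNotations.
Open Scope R_scope.

(* Variables are indexed 0..n-1 (paper: 1..n).  A literal (i, true) is x_{i+1},
   (i, false) is its complement. *)
Definition lit := (nat * bool)%type.

Inductive tree : Type :=
| Leaf : lit -> tree
| Join : tree -> tree -> tree.

(* A possibly empty syntax tree: None is the empty tree. *)
Definition stree := option tree.

Fixpoint tsize (t : tree) : nat :=
  match t with Leaf _ => 1 | Join a b => S (tsize a + tsize b) end.

Definition cplx (X : stree) : nat :=
  match X with None => 0 | Some t => tsize t end.

Fixpoint nleaves (t : tree) : nat :=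
  match t with Leaf _ => 1 | Join a b => (nleaves a + nleaves b)%nat end.

Fixpoint leaves (t : tree) : list lit :=
  match t with Leaf l => [l] | Join a b => leaves a ++ leaves b end.

Definition leaf_list (X : stree) : list lit :=
  match X with None => [] | Some t => leaves t end.

Definition wf (n : nat) (X : stree) : Prop :=
  forall l, In l (leaf_list X) -> (fst l < n)%nat.

(* WORDER: scan the leaf list; the first literal of each variable decides *)
Fixpoint worder_scan (w : nat -> R) (seen : list nat) (l : list lit) : R :=
  match l with
  | [] => 0
  | (i, b) :: r =>
      if existsb (Nat.eqb i) seen then worder_scan w seen r
      else (if b then w i else 0) + worder_scan w (i :: seen) r
  end.

Definition WORDER (w : nat -> R) (X : stree) : R := worder_scan w [] (leaf_list X).

Definition terminals (n : nat) : list lit :=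
  flat_map (fun i => [(i, true); (i, false)]) (seq 0 n).

(* replace the j-th leaf (inorder, 0-based) by u *)
Fixpoint replace_leaf (t : tree) (j : nat) (u : lit) : tree :=
  match t with
  | Leaf _ => Leaf u
  | Join a b =>
      if Nat.ltb j (nleaves a) then Join (replace_leaf a j u) b
      else Join a (replace_leaf b (j - nleaves a) u)
  end.

(* insert at the k-th node (preorder, 0-based): the node v is replaced by
   J(u, v) if first = true, else by J(v, u) *)
Fixpoint insert_at (t : tree) (k : nat) (u : lit) (first : bool) : tree :=
  match k with
  | O => if first then Join (Leaf u) t else Join t (Leaf u)
  | S k' =>
      match t with
      | Leaf _ => if first then Join (Leaf u) t else Join t (Leaf u) (* unreachable for k < size *)
      | Join a b =>
          if Nat.ltb k' (tsize a) then Join (insert_at a k' u first) b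
          else Join a (insert_at b (k' - tsize a) u first)
      end
  end.

Fixpoint delete_leaf (t : tree) (j : nat) : option tree :=
  match t with
  | Leaf _ => None
  | Join a b =>
      if Nat.ltb j (nleaves a) then
        match delete_leaf a j with
        | None => Some b
        | Some a' => Some (Join a' b)
        end
      else
        match delete_leaf b (j - nleaves a) with
        | None => Some a
        | Some b' => Some (Join a b')
        end
  end.

(* finitely supported distributions: lists of (probability, outcome) *)
Definition dist := list (R * stree).

Definition scale (p : R) (d : dist) : dist := map (fun q => (p * fst q, snd q)) d.

Definition substitute_dist (n : nat) (X : stree) : dist :=
  match X with
  | None => [(1, None)]
  | Some t =>
      flat_map (fun j =>
        map (fun u => (/ (INR (nleaves t) * INR (2 * n)), Some (replace_leaf t j u)))
            (terminals n))
        (seq 0 (nleaves t))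
  end.

Definition insert_dist (n : nat) (X : stree) : dist :=
  match X with
  | None => map (fun u => (/ INR (2 * n), Some (Leaf u))) (terminals n)
  | Some t =>
      flat_map (fun k =>
        flat_map (fun u =>
          map (fun b => (/ (INR (tsize t) * INR (2 * n) * 2), Some (insert_at t k u b)))
              [true; false])
          (terminals n))
        (seq 0 (tsize t))
  end.

Definition delete_dist (X : stree) : dist :=
  match X with
  | None => [(1, None)]
  | Some t => map (fun j => (/ INR (nleaves t), delete_leaf t j)) (seq 0 (nleaves t))
  end.

(* HVL-Prime with k = 1 *)
Definition mutate_dist (n : nat) (X : stree) : dist :=
  scale (/3) (substitute_dist n X) ++ scale (/3) (insert_dist n X)
    ++ scale (/3) (delete_dist X).

Definition select (w : nat -> R) (X Y : stree) : stree :=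
  if Rlt_dec (WORDER w X) (WORDER w Y) then Y
  else if Req_EM_T (WORDER w Y) (WORDER w X) then
         (if Nat.leb (cplx Y) (cplx X) then Y else X)
       else X.

Definition optimal (n : nat) (w : nat -> R) (X : stree) : Prop :=
  (forall Y, wf n Y -> WORDER w Y <= WORDER w X) /\
  (forall Y, wf n Y -> WORDER w Y = WORDER w X -> (cplx X <= cplx Y)%nat).

(* not_opt_prob n w t X = Pr[X_0, ..., X_t all non-optimal], X_0 = X,
   i.e. Pr[T > t] for the optimization time T *)
Fixpoint not_opt_prob (n : nat) (w : nat -> R) (t : nat) (X : stree) : R :=
  if excluded_middle_informative (optimal n w X) then 0
  else match t with
       | O => 1
       | S t' =>
           fold_right (fun q acc => fst q * not_opt_prob n w t' (select w X (snd q)) + acc)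
                      0 (mutate_dist n X)
       end.

(* partial sums sum_{t < N} Pr[T > t]; E[T] is their supremum (limit) *)
Definition expected_time_partial (n : nat) (w : nat -> R) (X : stree) (N : nat) : R :=
  fold_right Rplus 0 (map (fun t => not_opt_prob n w t X) (seq 0 N)).

Definition weights_ok (n : nat) (w : nat -> R) : Prop :=
  (forall i, (S i < n)%nat -> w (S i) <= w i) /\ (forall i, (i < n)%nat -> 0 < w i).

(* Main.v *)
Require Import Defs.
From Stdlib Require Import Reals Lra Lia Arith List Bool ClassicalEpsilon.
Import ListNotations.
Open Scope R_scope.

Definition lsum {A} (l : list A) (h : A -> R) : R :=
  fold_right (fun x acc => h x + acc) 0 l.

Lemma lsum_app {A} (l1 l2 : list A) h : lsum (l1 ++ l2) h = lsum l1 h + lsum l2 h.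
Proof. induction l1; simpl; [lra|]. unfold lsum in *; simpl; rewrite IHl1; lra. Qed.

Lemma lsum_flat_map {A B} (f : A -> list B) l h :
  lsum (flat_map f l) h = lsum l (fun x => lsum (f x) h).
Proof. induction l; simpl; [reflexivity|]. rewrite lsum_app, IHl. reflexivity. Qed.

Lemma lsum_map {A B} (f : A -> B) l h : lsum (map f l) h = lsum l (fun x => h (f x)).
Proof. induction l; simpl; [reflexivity|]. unfold lsum in *; simpl; rewrite IHl; reflexivity. Qed.

Lemma lsum_le {A} (l : list A) h1 h2 :
  (forall x, In x l -> h1 x <= h2 x) -> lsum l h1 <= lsum l h2.
Proof.
  induction l; intros H; simpl; [lra|]. unfold lsum in *; simpl.
  assert (h1 a <= h2 a) by (apply H; left; auto).
  assert (fold_right (fun x acc => h1 x + acc) 0 l <= fold_right (fun x acc => h2 x + acc) 0 l)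
    by (apply IHl; intros; apply H; right; auto). lra.
Qed.

Lemma lsum_ext {A} (l : list A) h1 h2 :
  (forall x, In x l -> h1 x = h2 x) -> lsum l h1 = lsum l h2.
Proof.
  induction l; intros H; simpl; [lra|]. unfold lsum in *; simpl.
  rewrite H by (left; auto). rewrite IHl; auto. intros; apply H; right; auto.
Qed.

Lemma lsum_plus {A} (l : list A) h1 h2 : lsum l (fun x => h1 x + h2 x) = lsum l h1 + lsum l h2.
Proof. induction l; simpl; [lra|]. unfold lsum in *; simpl; rewrite IHl; lra. Qed.

Lemma lsum_scal {A} (l : list A) c h : lsum l (fun x => c * h x) = c * lsum l h.
Proof. induction l; simpl; [lra|]. unfold lsum in *; simpl; rewrite IHl; lra. Qed.

Lemma lsum_const {A} (l : list A) c : lsum l (fun _ => c) = INR (length l) * c.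
Proof. induction l; [simpl; lra|]. unfold lsum in *; cbn [length fold_right]; rewrite IHl, S_INR; lra. Qed.

Lemma lsum_opp {A} (l : list A) h : lsum l (fun x => - h x) = - lsum l h.
Proof. induction l; simpl; [lra|]. unfold lsum in *; simpl; rewrite IHl; lra. Qed.

Lemma lsum_swap {A B} (l1 : list A) (l2 : list B) h :
  lsum l1 (fun x => lsum l2 (fun y => h x y)) = lsum l2 (fun y => lsum l1 (fun x => h x y)).
Proof.
  induction l1; simpl.
  - induction l2; simpl; [reflexivity|]. unfold lsum in *; simpl; rewrite <- IHl2; lra.
  - unfold lsum at 1; simpl. fold (lsum l1 (fun x => lsum l2 (fun y => h x y))).
    rewrite IHl1. rewrite lsum_plus. reflexivity.
Qed.

Fixpoint sumR (n : nat) (f : nat -> R) : R :=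
  match n with O => 0 | S m => sumR m f + f m end.

Lemma sumR_ext n f g : (forall v, (v < n)%nat -> f v = g v) -> sumR n f = sumR n g.
Proof. induction n; intros H; simpl; [auto|]. rewrite IHn, H; auto; intros; apply H; lia. Qed.

Lemma sumR_point n f g i : (i < n)%nat -> (forall v, v <> i -> f v = g v) ->
  sumR n f = sumR n g + (f i - g i).
Proof.
  induction n; intros Hi H; [lia|]. simpl.
  destruct (Nat.eq_dec i n).
  - subst. rewrite (sumR_ext n f g); [lra|]. intros; apply H; lia.
  - rewrite IHn by (auto; lia). rewrite (H n) by auto. lra.
Qed.

Lemma lsum_seq_sumR n f : lsum (seq 0 n) f = sumR n f.
Proof.
  induction n; [reflexivity|]. rewrite seq_S, lsum_app, IHn. cbn [sumR].
  unfold lsum; simpl. lra.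
Qed.

Lemma sumR_le n f g : (forall v, (v < n)%nat -> f v <= g v) -> sumR n f <= sumR n g.
Proof. induction n; intros H; simpl; [lra|]. assert (f n <= g n) by (apply H; lia).
  assert (sumR n f <= sumR n g) by (apply IHn; intros; apply H; lia). lra. Qed.

Lemma sumR_plus n f g : sumR n (fun v => f v + g v) = sumR n f + sumR n g.
Proof. induction n; simpl; [lra|]. rewrite IHn; lra. Qed.

Lemma sumR_const n c : sumR n (fun _ => c) = INR n * c.
Proof. induction n; [simpl; lra|]. cbn [sumR]; rewrite IHn, S_INR; lra. Qed.

Lemma nleaves_len t : nleaves t = length (leaves t).
Proof. induction t; simpl; auto. rewrite length_app; lia. Qed.

Lemma nleaves_pos t : (1 <= nleaves t)%nat.
Proof. induction t; simpl; lia. Qed.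

Lemma tsize_leaves t : tsize t = (2 * nleaves t - 1)%nat.
Proof. induction t; simpl; auto. pose proof (nleaves_pos t1); pose proof (nleaves_pos t2); lia. Qed.

Lemma cplx_len X : cplx X = (2 * length (leaf_list X) - 1)%nat.
Proof. destruct X; simpl; auto. rewrite tsize_leaves, nleaves_len; auto. Qed.

Lemma replace_split t j u : (j < nleaves t)%nat ->
  exists l1 a l2, leaves t = l1 ++ a :: l2 /\ leaves (replace_leaf t j u) = l1 ++ u :: l2.
Proof.
  revert j; induction t; intros j Hj; simpl.
  - exists [], l, []; auto.
  - simpl in Hj. destruct (Nat.ltb j (nleaves t1)) eqn:E.
    + apply Nat.ltb_lt in E. destruct (IHt1 j E) as (l1 & a & l2 & H1 & H2).
      exists l1, a, (l2 ++ leaves t2). simpl. rewrite H1, H2, <- !app_assoc; auto.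
    + apply Nat.ltb_ge in E. destruct (IHt2 (j - nleaves t1)%nat) as (l1 & a & l2 & H1 & H2); [lia|].
      exists (leaves t1 ++ l1), a, l2. simpl. rewrite H1, H2, <- !app_assoc; auto.
Qed.

Lemma insert_split t k u f :
  exists l1 l2, leaves t = l1 ++ l2 /\ leaves (insert_at t k u f) = l1 ++ u :: l2.
Proof.
  revert k; induction t; intros k.
  - destruct k; simpl; destruct f; simpl.
    all: first [solve [exists [], [l]; auto] | solve [exists [l], []; auto]].
  - destruct k; simpl.
    + destruct f; simpl.
      * exists [], (leaves t1 ++ leaves t2); auto.
      * exists (leaves t1 ++ leaves t2), []; simpl; rewrite app_nil_r; auto.
    + destruct (Nat.ltb k (tsize t1)).
      * destruct (IHt1 k) as (l1 & l2 & H1 & H2). exists l1, (l2 ++ leaves t2); simpl.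
        rewrite H1, H2, <- !app_assoc; auto.
      * destruct (IHt2 (k - tsize t1)%nat) as (l1 & l2 & H1 & H2).
        exists (leaves t1 ++ l1), l2; simpl. rewrite H1, H2, <- !app_assoc; auto.
Qed.

Fixpoint remove_nth {A} (j : nat) (L : list A) : list A :=
  match L with [] => [] | a :: r => match j with O => r | S j' => a :: remove_nth j' r end end.

Lemma remove_nth_app_l {A} j (l1 l2 : list A) : (j < length l1)%nat ->
  remove_nth j (l1 ++ l2) = remove_nth j l1 ++ l2.
Proof. revert j; induction l1; intros j H; simpl in *; [lia|]. destruct j; auto.
  simpl. rewrite IHl1 by lia; auto. Qed.

Lemma remove_nth_app_r {A} j (l1 l2 : list A) : (length l1 <= j)%nat ->
  remove_nth j (l1 ++ l2) = l1 ++ remove_nth (j - length l1) l2.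
Proof. revert j; induction l1; intros j H; simpl in *. rewrite Nat.sub_0_r; auto.
  destruct j; [lia|]. simpl. rewrite IHl1 by lia; auto. Qed.

Lemma remove_nth_split {A} j (L : list A) : (j < length L)%nat ->
  exists l1 a l2, L = l1 ++ a :: l2 /\ remove_nth j L = l1 ++ l2.
Proof.
  revert j; induction L; intros j H; simpl in *; [lia|]. destruct j.
  - exists [], a, L; auto.
  - destruct (IHL j) as (l1 & b & l2 & H1 & H2); [lia|].
    exists (a :: l1), b, l2; simpl; rewrite H2, H1; auto.
Qed.

Lemma delete_leaves t j : (j < nleaves t)%nat ->
  leaf_list (delete_leaf t j) = remove_nth j (leaves t).
Proof.
  revert j; induction t; intros j Hj; simpl in *.
  - destruct j; [auto|lia].
  - destruct (Nat.ltb j (nleaves t1)) eqn:E.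
    + apply Nat.ltb_lt in E. rewrite remove_nth_app_l by (rewrite <- nleaves_len; auto).
      specialize (IHt1 j E). destruct (delete_leaf t1 j); simpl in *; rewrite <- IHt1; auto.
    + apply Nat.ltb_ge in E. rewrite remove_nth_app_r by (rewrite <- nleaves_len; auto).
      rewrite <- nleaves_len. specialize (IHt2 (j - nleaves t1)%nat ltac:(lia)).
      destruct (delete_leaf t2 _); simpl in *; rewrite <- IHt2; auto. rewrite app_nil_r; auto.
Qed.

Definition mem (x : nat) (s : list nat) : bool := existsb (Nat.eqb x) s.

Fixpoint fs (L : list lit) (v : nat) : option bool :=
  match L with [] => None | (i, b) :: r => if Nat.eqb i v then Some b else fs r v end.

Definition chi L v : bool := match fs L v with Some true => true | _ => false end.

Fixpoint Pc (seen : list nat) (L : list lit) : nat :=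
  match L with
  | [] => O
  | (i, b) :: r => if existsb (Nat.eqb i) seen then Pc seen r
                   else ((if b then 1 else 0) + Pc (i :: seen) r)%nat
  end.

Definition b2R (b : bool) : R := if b then 1 else 0.

Definition lits_lt n (L : list lit) := forall a, In a L -> (fst a < n)%nat.

Lemma worder_sum n w seen L : lits_lt n L ->
  worder_scan w seen L = sumR n (fun v => if mem v seen then 0 else w v * b2R (chi L v)).
Proof.
  revert seen; induction L as [|[i b] r IH]; intros seen HL.
  - simpl. rewrite (sumR_ext n _ (fun _ => 0)).
    + rewrite sumR_const; lra.
    + intros v _. unfold chi; simpl. destruct (mem v seen); simpl; lra.
  - assert (Hi : (i < n)%nat) by (apply (HL (i, b)); left; auto).
    assert (Hr : lits_lt n r) by (intros a Ha; apply HL; right; auto).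
    simpl. destruct (existsb (Nat.eqb i) seen) eqn:E.
    + rewrite IH by auto. apply sumR_ext. intros v _.
      unfold chi; simpl. destruct (Nat.eqb i v) eqn:E2; auto.
      apply Nat.eqb_eq in E2; subst. unfold mem; rewrite E; auto.
    + rewrite IH by auto. symmetry.
      rewrite (sumR_point n _
                (fun v => if mem v (i :: seen) then 0 else w v * b2R (chi r v)) i Hi).
      * unfold mem; simpl. rewrite Nat.eqb_refl. fold (mem i seen). unfold mem. rewrite E. simpl.
        unfold chi; simpl. rewrite Nat.eqb_refl. destruct b; simpl; lra.
      * intros v Hv. unfold mem; simpl.
        assert (Nat.eqb v i = false) by (apply Nat.eqb_neq; auto).
        assert (Nat.eqb i v = false) by (apply Nat.eqb_neq; auto).
        rewrite H. simpl. unfold chi; simpl. rewrite H0. auto.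
Qed.

Lemma Pc_INR seen L : INR (Pc seen L) = worder_scan (fun _ => 1) seen L.
Proof.
  revert seen; induction L as [|[i b] r IH]; intros seen; simpl; auto.
  destruct (existsb (Nat.eqb i) seen); auto. rewrite plus_INR, IH. destruct b; simpl; lra.
Qed.

Lemma P_sum n L : lits_lt n L -> INR (Pc [] L) = sumR n (fun v => b2R (chi L v)).
Proof.
  intros H. rewrite Pc_INR, (worder_sum n) by auto. apply sumR_ext; intros; simpl. lra.
Qed.

Lemma W_sum n w L : lits_lt n L -> worder_scan w [] L = sumR n (fun v => w v * b2R (chi L v)).
Proof. intros H. rewrite (worder_sum n) by auto. apply sumR_ext; intros; simpl. auto. Qed.

Lemma fs_app l1 l2 v : fs (l1 ++ l2) v = match fs l1 v with Some s => Some s | None => fs l2 v end.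
Proof. induction l1 as [|[i b] r IH]; simpl; auto. destruct (Nat.eqb i v); auto. Qed.

Lemma chi_edit l1 l2 m1 m2 v : fs m1 v = fs m2 v -> chi (l1 ++ m1 ++ l2) v = chi (l1 ++ m2 ++ l2) v.
Proof. intros H. unfold chi. rewrite !fs_app, H. auto. Qed.

Lemma Pc_le_len seen L : (Pc seen L <= length L)%nat.
Proof.
  revert seen; induction L as [|[i b] r IH]; intros seen; simpl; auto.
  destruct (existsb (Nat.eqb i) seen). specialize (IH seen); lia. specialize (IH (i :: seen)); destruct b; lia.
Qed.

Lemma sumR_b2R_le n c : sumR n (fun v => b2R (c v)) <= INR n.
Proof. rewrite <- (Rmult_1_r (INR n)), <- sumR_const. apply sumR_le; intros; unfold b2R; destruct (c v); lra. Qed.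

Lemma P_le_n n L : lits_lt n L -> (Pc [] L <= n)%nat.
Proof. intros H. apply INR_le. rewrite (P_sum n) by auto. apply sumR_b2R_le. Qed.

Lemma mem_In x s : mem x s = true <-> In x s.
Proof. unfold mem. rewrite existsb_exists. split.
  - intros (y & Hy & E). apply Nat.eqb_eq in E; subst; auto.
  - intros H; exists x; split; auto; apply Nat.eqb_refl. Qed.

Lemma Pc_mono s1 s2 L : (forall x, In x s1 -> In x s2) -> (Pc s2 L <= Pc s1 L)%nat.
Proof.
  revert s1 s2; induction L as [|[i b] r IH]; intros s1 s2 Hs; simpl; auto.
  destruct (existsb (Nat.eqb i) s1) eqn:E1.
  - assert (E2 : existsb (Nat.eqb i) s2 = true).
    { change (mem i s2 = true). apply mem_In, Hs, mem_In. exact E1. }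
    rewrite E2. apply IH; auto.
  - destruct (existsb (Nat.eqb i) s2) eqn:E2.
    + assert (Pc s2 r <= Pc (i :: s1) r)%nat.
      { apply IH. intros x [Hx|Hx]; [subst; apply mem_In; exact E2| auto]. }
      lia.
    + assert (Pc (i :: s2) r <= Pc (i :: s1) r)%nat.
      { apply IH. intros x [Hx|Hx]; [left; auto| right; auto]. }
      lia.
Qed.

Lemma Pc_full seen L : Pc seen L = length L ->
  forall v, mem v seen = false -> fs L v <> Some false.
Proof.
  revert seen; induction L as [|[i b] r IH]; intros seen H v Hv; simpl in *; [discriminate|].
  destruct (existsb (Nat.eqb i) seen) eqn:E.
  - pose proof (Pc_le_len seen r); lia.
  - pose proof (Pc_le_len (i :: seen) r).
    destruct b; [|lia].
    destruct (Nat.eqb i v) eqn:E2; [discriminate|].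
    apply (IH (i :: seen)); [lia|]. unfold mem; simpl.
    rewrite Nat.eqb_sym, E2. exact Hv.
Qed.

Lemma select_cases w X Y :
  select w X Y = X \/
  (select w X Y = Y /\ (WORDER w X < WORDER w Y \/
                        (WORDER w Y = WORDER w X /\ (cplx Y <= cplx X)%nat))).
Proof.
  unfold select. destruct (Rlt_dec (WORDER w X) (WORDER w Y)); [right; auto|].
  destruct (Req_EM_T (WORDER w Y) (WORDER w X)); [|left; auto].
  destruct (Nat.leb (cplx Y) (cplx X)) eqn:E; [|left; auto].
  right; split; auto. right; split; auto. apply Nat.leb_le; auto.
Qed.

Lemma select_self w X : select w X X = X.
Proof. destruct (select_cases w X X) as [H|[H _]]; auto. Qed.

Lemma select_acc w X Y : WORDER w X < WORDER w Y \/
   (WORDER w Y = WORDER w X /\ (cplx Y <= cplx X)%nat) -> select w X Y = Y.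
Proof.
  unfold select. intros [H|[H1 H2]].
  - destruct (Rlt_dec (WORDER w X) (WORDER w Y)); auto; lra.
  - destruct (Rlt_dec (WORDER w X) (WORDER w Y)); auto.
    destruct (Req_EM_T (WORDER w Y) (WORDER w X)); [|contradiction].
    apply Nat.leb_le in H2; rewrite H2; auto.
Qed.

Lemma diff2 n w (LX LY : list lit) i j : lits_lt n LX -> lits_lt n LY -> (i < n)%nat -> (j < n)%nat ->
  (forall v, v <> i -> v <> j -> chi LY v = chi LX v) ->
  worder_scan w [] LY = worder_scan w [] LX + w i * (b2R (chi LY i) - b2R (chi LX i))
     + (if Nat.eqb i j then 0 else w j * (b2R (chi LY j) - b2R (chi LX j))).
Proof.
  intros HX HY Hi Hj Hag. rewrite !(W_sum n) by auto.
  destruct (Nat.eqb i j) eqn:E.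
  - apply Nat.eqb_eq in E; subst.
    rewrite (sumR_point n _ (fun v => w v * b2R (chi LX v)) j Hj). lra.
    intros v Hv; rewrite Hag; auto.
  - apply Nat.eqb_neq in E.
    rewrite (sumR_point n _ (fun v => if Nat.eqb v j then w j * b2R (chi LX j) else w v * b2R (chi LY v)) j Hj).
    rewrite (sumR_point n _ (fun v => w v * b2R (chi LX v)) i Hi).
    + rewrite Nat.eqb_refl. assert (Nat.eqb i j = false) by (apply Nat.eqb_neq; auto).
      rewrite H. lra.
    + intros v Hv. destruct (Nat.eqb v j) eqn:E2; auto.
      apply Nat.eqb_eq in E2; subst; auto. rewrite Hag; auto. apply Nat.eqb_neq; auto.
    + intros v Hv. apply Nat.eqb_neq in Hv. rewrite Hv. auto.
Qed.

Lemma two_point_mono (wi wj : R) ci cj di dj (same : bool) : 0 < wi -> 0 < wj ->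
  0 <= wi * (b2R ci - b2R di) + (if same then 0 else wj * (b2R cj - b2R dj)) ->
  0 <= (b2R ci - b2R di) + (if same then 0 else (b2R cj - b2R dj)).
Proof. intros; destruct ci, cj, di, dj, same; unfold b2R in *; simpl in *; lra. Qed.

Section Acc.
Variable n : nat.
Variable w : nat -> R.
Hypothesis wpos : forall i, (i < n)%nat -> 0 < w i.

Definition PP (X : stree) := Pc [] (leaf_list X).
Definition LL (X : stree) := length (leaf_list X).

Lemma PP_diff (LX LY : list lit) i j : lits_lt n LX -> lits_lt n LY -> (i < n)%nat -> (j < n)%nat ->
  (forall v, v <> i -> v <> j -> chi LY v = chi LX v) ->
  INR (Pc [] LY) = INR (Pc [] LX) + (b2R (chi LY i) - b2R (chi LX i))
     + (if Nat.eqb i j then 0 else (b2R (chi LY j) - b2R (chi LX j))).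
Proof.
  intros. rewrite !Pc_INR. rewrite (diff2 n (fun _ => 1) LX LY i j) by auto. destruct (Nat.eqb i j); lra.
Qed.

Lemma acc_mono X Y i j : lits_lt n (leaf_list X) -> lits_lt n (leaf_list Y) -> (i < n)%nat -> (j < n)%nat ->
  (forall v, v <> i -> v <> j -> chi (leaf_list Y) v = chi (leaf_list X) v) ->
  select w X Y = Y -> (PP X <= PP Y)%nat.
Proof.
  intros HX HY Hi Hj Hag Hs. unfold PP.
  assert (HW : WORDER w X <= WORDER w Y).
  { destruct (select_cases w X Y) as [H|[_ [H|[H _]]]]; try lra.
    rewrite H in Hs; rewrite <- Hs; lra. }
  unfold WORDER in HW. rewrite (diff2 n w (leaf_list X) (leaf_list Y) i j) in HW by auto.
  apply INR_le. rewrite (PP_diff (leaf_list X) (leaf_list Y) i j) by auto.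
  assert (0 <= (b2R (chi (leaf_list Y) i) - b2R (chi (leaf_list X) i)) +
     (if Nat.eqb i j then 0 else (b2R (chi (leaf_list Y) j) - b2R (chi (leaf_list X) j)))).
  { apply (two_point_mono (w i) (w j)); auto. lra. }
  lra.
Qed.

Lemma lits_sub l1 a l2 u : lits_lt n (l1 ++ a :: l2) -> (fst u < n)%nat -> lits_lt n (l1 ++ u :: l2).
Proof.
  intros H Hu x Hx. apply in_app_or in Hx. destruct Hx as [Hx|[Hx|Hx]].
  - apply H, in_or_app; auto.
  - subst; auto.
  - apply H, in_or_app; right; right; auto.
Qed.

Lemma lits_ins l1 l2 u : lits_lt n (l1 ++ l2) -> (fst u < n)%nat -> lits_lt n (l1 ++ u :: l2).
Proof.
  intros H Hu x Hx. apply in_app_or in Hx. destruct Hx as [Hx|[Hx|Hx]].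
  - apply H, in_or_app; auto.
  - subst; auto.
  - apply H, in_or_app; right; auto.
Qed.

Lemma lits_del l1 a l2 : lits_lt n (l1 ++ a :: l2) -> lits_lt n (l1 ++ l2).
Proof.
  intros H x Hx. apply in_app_or in Hx. destruct Hx as [Hx|Hx].
  - apply H, in_or_app; auto.
  - apply H, in_or_app; right; right; auto.
Qed.

Lemma acc_sub X Y l1 a l2 u : lits_lt n (leaf_list X) -> (fst u < n)%nat ->
  leaf_list X = l1 ++ a :: l2 -> leaf_list Y = l1 ++ u :: l2 ->
  select w X Y = Y -> (PP X <= PP Y)%nat /\ LL Y = LL X.
Proof.
  intros HX Hu EX EY Hs. split.
  - assert (Ha : (fst a < n)%nat) by (apply HX; rewrite EX; apply in_or_app; right; left; auto).
    apply (acc_mono X Y (fst u) (fst a)); auto.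
    + rewrite EY. rewrite EX in HX. apply (lits_sub l1 a); auto.
    + intros v H1 H2. rewrite EX, EY.
      apply (chi_edit l1 l2 [u] [a]). simpl. destruct u as [i b], a as [i' b']; simpl in *.
      rewrite (proj2 (Nat.eqb_neq i v)), (proj2 (Nat.eqb_neq i' v)); auto.
  - unfold LL. rewrite EX, EY, !length_app. auto.
Qed.

Lemma acc_del X Y l1 a l2 : lits_lt n (leaf_list X) ->
  leaf_list X = l1 ++ a :: l2 -> leaf_list Y = l1 ++ l2 ->
  (select w X Y = Y <-> (PP X <= PP Y)%nat).
Proof.
  intros HX EX EY.
  assert (Ha : (fst a < n)%nat) by (apply HX; rewrite EX; apply in_or_app; right; left; auto).
  assert (HY : lits_lt n (leaf_list Y)) by (rewrite EY; rewrite EX in HX; apply (lits_del l1 a); auto).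
  assert (Hag : forall v, v <> fst a -> v <> fst a -> chi (leaf_list Y) v = chi (leaf_list X) v).
  { intros v H1 _. rewrite EX, EY. apply (chi_edit l1 l2 [] [a]). simpl.
    destruct a as [i b]; simpl in *. rewrite (proj2 (Nat.eqb_neq i v)); auto. }
  split.
  - intros; apply (acc_mono X Y (fst a) (fst a)); auto.
  - intros HP. apply select_acc.
    pose proof (diff2 n w _ _ (fst a) (fst a) HX HY Ha Ha Hag) as D.
    pose proof (PP_diff _ _ (fst a) (fst a) HX HY Ha Ha Hag) as D2.
    rewrite Nat.eqb_refl in D, D2. unfold PP in HP. apply le_INR in HP.
    assert (Hw := wpos _ Ha).
    destruct (chi (leaf_list Y) (fst a)), (chi (leaf_list X) (fst a)); unfold b2R in *.
    all: unfold WORDER.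
    all: try (left; lra).
    all: right; split; [lra|].
    all: rewrite !cplx_len, EX, EY, !length_app; simpl; lia.
Qed.

Lemma acc_ins X Y l1 l2 u : lits_lt n (leaf_list X) -> (fst u < n)%nat ->
  leaf_list X = l1 ++ l2 -> leaf_list Y = l1 ++ u :: l2 ->
  select w X Y = Y -> PP Y = S (PP X) /\ LL Y = S (LL X).
Proof.
  intros HX Hu EX EY Hs.
  assert (HY : lits_lt n (leaf_list Y)) by (rewrite EY; rewrite EX in HX; apply lits_ins; auto).
  assert (Hag : forall v, v <> fst u -> v <> fst u -> chi (leaf_list Y) v = chi (leaf_list X) v).
  { intros v H1 _. rewrite EX, EY. apply (chi_edit l1 l2 [u] []). simpl.
    destruct u as [i b]; simpl in *. rewrite (proj2 (Nat.eqb_neq i v)); auto. }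
  assert (HLL : LL Y = S (LL X)) by (unfold LL; rewrite EX, EY, !length_app; simpl; lia).
  split; auto.
  pose proof (diff2 n w _ _ (fst u) (fst u) HX HY Hu Hu Hag) as D.
  pose proof (PP_diff _ _ (fst u) (fst u) HX HY Hu Hu Hag) as D2.
  rewrite Nat.eqb_refl in D, D2. assert (Hw := wpos _ Hu).
  destruct (select_cases w X Y) as [H|[_ [H|[H1 H2]]]].
  - rewrite H in Hs. rewrite Hs in HLL. lia.
  - unfold WORDER in H. unfold PP. apply INR_eq. rewrite S_INR.
    destruct (chi (leaf_list Y) (fst u)), (chi (leaf_list X) (fst u)); unfold b2R in *; lra.
  - exfalso. rewrite !cplx_len in H2. unfold LL in HLL. lia.
Qed.

Lemma ins_gain X Y l1 l2 i : lits_lt n (leaf_list X) -> (i < n)%nat ->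
  leaf_list X = l1 ++ l2 -> leaf_list Y = l1 ++ (i, true) :: l2 ->
  chi (leaf_list X) i = false -> PP X = LL X -> select w X Y = Y.
Proof.
  intros HX Hi EX EY Hc Hfull.
  assert (HY : lits_lt n (leaf_list Y)) by (rewrite EY; rewrite EX in HX; apply lits_ins; auto).
  assert (Hag : forall v, v <> i -> v <> i -> chi (leaf_list Y) v = chi (leaf_list X) v).
  { intros v H1 _. rewrite EX, EY. apply (chi_edit l1 l2 [(i,true)] []). simpl.
    rewrite (proj2 (Nat.eqb_neq i v)); auto. }
  assert (Hnone : fs (leaf_list X) i = None).
  { pose proof (Pc_full [] (leaf_list X) Hfull i eq_refl).
    unfold chi in Hc. destruct (fs (leaf_list X) i) as [[|]|]; auto; try discriminate. contradiction. }
  assert (HcY : chi (leaf_list Y) i = true).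
  { rewrite EX in Hnone. rewrite fs_app in Hnone. unfold chi; rewrite EY, fs_app.
    destruct (fs l1 i); [discriminate|]. simpl. rewrite Nat.eqb_refl; auto. }
  apply select_acc. left.
  pose proof (diff2 n w _ _ i i HX HY Hi Hi Hag) as D. rewrite Nat.eqb_refl in D.
  rewrite HcY, Hc in D. unfold b2R in D. unfold WORDER. assert (Hw := wpos _ Hi). lra.
Qed.

End Acc.

Definition badind (seen : list nat) (L : list lit) (j : nat) : R :=
  if Nat.ltb (Pc seen (remove_nth j L)) (Pc seen L) then 1 else 0.

Lemma lsum_seq_S m (f : nat -> R) : lsum (seq 0 (S m)) f = f O + lsum (seq 0 m) (fun j => f (S j)).
Proof. rewrite <- cons_seq, <- seq_shift. unfold lsum at 1; simpl. fold (lsum (map S (seq 0 m)) f).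
  rewrite lsum_map. auto. Qed.

Lemma cntbad_le seen L : lsum (seq 0 (length L)) (badind seen L) <= INR (Pc seen L).
Proof.
  revert seen; induction L as [|[i b] r IH]; intros seen.
  - simpl. unfold lsum; simpl; lra.
  - cbn [length]. rewrite lsum_seq_S. unfold badind at 1. cbn [remove_nth].
    destruct (existsb (Nat.eqb i) seen) eqn:E.
    + assert (Hs : forall x, Pc seen ((i, b) :: x) = Pc seen x) by (intros; simpl; rewrite E; auto).
      rewrite Hs. rewrite Nat.ltb_irrefl.
      rewrite (lsum_ext _ _ (badind seen r)).
      * specialize (IH seen). lra.
      * intros j _. unfold badind. cbn [remove_nth]. rewrite !Hs. auto.
    + assert (Hs : forall x, Pc seen ((i, b) :: x) = ((if b then 1 else 0) + Pc (i :: seen) x)%nat)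
        by (intros; simpl; rewrite E; auto).
      rewrite (lsum_ext _ _ (badind (i :: seen) r)).
      * specialize (IH (i :: seen)). rewrite Hs, plus_INR.
        assert (Hm : (Pc (i :: seen) r <= Pc seen r)%nat) by (apply Pc_mono; intros; right; auto).
        assert ((if Nat.ltb (Pc seen r) ((if b then 1 else 0) + Pc (i :: seen) r) then 1 else 0)
                 <= INR (if b then 1 else 0)).
        { destruct b; simpl. destruct (Nat.ltb _ _); lra.
          destruct (Nat.ltb (Pc seen r) (Pc (i :: seen) r)) eqn:E2; [|lra].
          apply Nat.ltb_lt in E2; lia. }
        lra.
      * intros j _. unfold badind. cbn [remove_nth]. rewrite !Hs.
        destruct (Nat.ltb (Pc (i :: seen) (remove_nth j r)) (Pc (i :: seen) r)) eqn:E2.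
        -- apply Nat.ltb_lt in E2. rewrite (proj2 (Nat.ltb_lt _ _)); auto; lia.
        -- apply Nat.ltb_ge in E2. rewrite (proj2 (Nat.ltb_ge _ _)); auto; lia.
Qed.

Lemma ln_le_xm1 x : 0 < x -> ln x <= x - 1.
Proof. intros H. pose proof (exp_ineq1_le (ln x)). rewrite exp_ln in H0; auto. lra. Qed.

Lemma ln_mono x y : 0 < x -> x <= y -> ln x <= ln y.
Proof. intros H1 H2. destruct (Rle_lt_or_eq_dec x y H2). left; apply ln_increasing; auto. subst; lra. Qed.

Lemma ln_ge0 x : 1 <= x -> 0 <= ln x.
Proof. intros H. rewrite <- ln_1. apply ln_mono; lra. Qed.

Lemma ln_step (b : nat) : (2 <= b)%nat -> ln (INR b) - ln (INR (b - 1)) >= 1 / INR b.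
Proof.
  intros Hb. assert (H1 : 1 <= INR (b - 1)) by (apply (le_INR 1); lia).
  assert (Hb' : INR b = INR (b - 1) + 1) by (rewrite <- S_INR; f_equal; lia).
  pose proof (ln_le_xm1 (INR (b - 1) / INR b)) as H.
  assert (0 < INR (b-1) / INR b) by (apply Rdiv_lt_0_compat; lra).
  specialize (H H0). unfold Rdiv in H. rewrite ln_mult, ln_Rinv in H by (try apply Rinv_0_lt_compat; lra).
  assert (INR (b - 1) * / INR b - 1 = - (1 / INR b)) by (rewrite Hb'; field; lra). lra.
Qed.

Section Pot.
Variable n : nat.
Hypothesis n1 : (1 <= n)%nat.

Definition F (m : nat) : R := match m with O => 0 | _ => 3 * INR m + 3 * INR n * (1 + ln (INR m)) end.
Definition G (m : nat) : R := match m with O => 0 | _ => 6 * INR n * (1 + ln (INR m)) end.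

Lemma F_S m : F (S m) = 3 * INR (S m) + 3 * INR n * (1 + ln (INR (S m))).
Proof. reflexivity. Qed.
Lemma G_S m : G (S m) = 6 * INR n * (1 + ln (INR (S m))).
Proof. reflexivity. Qed.
Lemma F_0 : F O = 0. Proof. reflexivity. Qed.
Lemma G_0 : G O = 0. Proof. reflexivity. Qed.

Lemma INR_n_pos : 1 <= INR n.
Proof. apply (le_INR 1); auto. Qed.

Lemma F_nonneg m : 0 <= F m.
Proof. destruct m; [rewrite F_0; lra|]. rewrite F_S. pose proof (ln_ge0 (INR (S m)) ltac:(apply (le_INR 1); lia)).
  pose proof INR_n_pos. pose proof (pos_INR (S m)). nra. Qed.

Lemma G_nonneg m : 0 <= G m.
Proof. destruct m; [rewrite G_0; lra|]. rewrite G_S. pose proof (ln_ge0 (INR (S m)) ltac:(apply (le_INR 1); lia)).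
  pose proof INR_n_pos. nra. Qed.

Lemma F_mono a b : (a <= b)%nat -> F a <= F b.
Proof.
  intros H. destruct a. apply F_nonneg. destruct b; [lia|]. rewrite !F_S.
  assert (INR (S a) <= INR (S b)) by (apply le_INR; lia).
  pose proof (ln_mono (INR (S a)) (INR (S b)) ltac:(apply (lt_0_INR); lia) H0).
  pose proof INR_n_pos. nra.
Qed.

Lemma G_mono a b : (a <= b)%nat -> G a <= G b.
Proof.
  intros H. destruct a. apply G_nonneg. destruct b; [lia|]. rewrite !G_S.
  assert (INR (S a) <= INR (S b)) by (apply le_INR; lia).
  pose proof (ln_mono (INR (S a)) (INR (S b)) ltac:(apply (lt_0_INR); lia) H0).
  pose proof INR_n_pos. nra.
Qed.

Lemma F_step b : (1 <= b)%nat -> F b - F (b - 1) >= 3 + 3 * INR n / INR b.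
Proof.
  intros Hb. destruct (Nat.eq_dec b 1).
  - subst. simpl (1-1)%nat. rewrite F_S, F_0. simpl INR. rewrite ln_1. unfold Rdiv. rewrite Rinv_1. lra.
  - pose proof (ln_step b ltac:(lia)). destruct b as [|b]; [lia|]. destruct b as [|b]; [lia|].
    replace (S (S b) - 1)%nat with (S b) by lia. rewrite !F_S.
    replace (INR (S (S b))) with (INR (S b) + 1) in * by (rewrite (S_INR (S b)); auto).
    replace (S (S b) - 1)%nat with (S b) in H by lia.
    pose proof INR_n_pos.
    assert (3 * INR n * (ln (INR (S b) + 1) - ln (INR (S b))) >= 3 * INR n * (1 / (INR (S b) + 1))).
    { apply Rle_ge, Rmult_le_compat_l; lra. }
    unfold Rdiv in *. lra.
Qed.

Lemma G_step k : (1 <= k)%nat -> G k - G (k - 1) >= 6 * INR n / INR k.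
Proof.
  intros Hk. pose proof INR_n_pos. destruct (Nat.eq_dec k 1).
  - subst. simpl (1-1)%nat. rewrite G_S, G_0. simpl INR. rewrite ln_1. unfold Rdiv. rewrite Rinv_1. lra.
  - pose proof (ln_step k ltac:(lia)). destruct k as [|k]; [lia|]. destruct k as [|k]; [lia|].
    replace (S (S k) - 1)%nat with (S k) in * by lia. rewrite !G_S.
    assert (6 * INR n * (ln (INR (S (S k))) - ln (INR (S k))) >= 6 * INR n * (1 / INR (S (S k)))).
    { apply Rle_ge, Rmult_le_compat_l; lra. }
    unfold Rdiv in *. lra.
Qed.

Definition gL (L : list lit) : R := F (length L - Pc [] L) + G (n - Pc [] L).
Definition gX (X : stree) : R := gL (leaf_list X).

Lemma gX_nonneg X : 0 <= gX X.
Proof. unfold gX, gL. pose proof (F_nonneg (length (leaf_list X) - Pc [] (leaf_list X))).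
  pose proof (G_nonneg (n - Pc [] (leaf_list X))). lra. Qed.

Lemma gX_mono X Y : (PP X <= PP Y)%nat -> (LL Y - PP Y <= LL X - PP X)%nat -> gX Y <= gX X.
Proof.
  intros H1 H2. unfold gX, gL, PP, LL in *.
  pose proof (F_mono _ _ H2). pose proof (G_mono (n - Pc [] (leaf_list Y)) (n - Pc [] (leaf_list X)) ltac:(lia)).
  lra.
Qed.

Variable w : nat -> R.
Hypothesis wpos : forall i, (i < n)%nat -> 0 < w i.

Lemma out_sub X Y l1 a l2 u : lits_lt n (leaf_list X) -> (fst u < n)%nat ->
  leaf_list X = l1 ++ a :: l2 -> leaf_list Y = l1 ++ u :: l2 ->
  gX (select w X Y) <= gX X.
Proof.
  intros. destruct (select_cases w X Y) as [H3|[H3 _]]; rewrite H3; [lra|].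
  destruct (acc_sub n w wpos X Y l1 a l2 u) as [A B]; auto.
  apply gX_mono; auto. lia.
Qed.

Lemma out_del X Y l1 a l2 : lits_lt n (leaf_list X) ->
  leaf_list X = l1 ++ a :: l2 -> leaf_list Y = l1 ++ l2 ->
  gX (select w X Y) <= gX X - (if Nat.leb (PP X) (PP Y)
                                 then F (LL X - PP X) - F (LL X - PP X - 1) else 0).
Proof.
  intros HX EX EY.
  pose proof (acc_del n w wpos X Y l1 a l2 HX EX EY) as [A1 A2].
  assert (HLL : LL Y = (LL X - 1)%nat /\ (1 <= LL X)%nat)
    by (unfold LL; rewrite EX, EY, !length_app; simpl; lia).
  pose proof (Pc_le_len [] (leaf_list Y)). fold (PP Y) in H. fold (LL Y) in H.
  destruct (Nat.leb (PP X) (PP Y)) eqn:E.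
  - apply Nat.leb_le in E. rewrite (A2 E).
    unfold gX, gL. fold (PP X) (PP Y) (LL X) (LL Y).
    pose proof (F_mono (LL Y - PP Y) (LL X - PP X - 1) ltac:(lia)).
    pose proof (G_mono (n - PP Y) (n - PP X) ltac:(lia)). lra.
  - destruct (select_cases w X Y) as [H3|[H3 _]]; rewrite H3; [lra|].
    apply Nat.leb_gt in E. specialize (A1 H3). lia.
Qed.

Definition mgain (X : stree) (u : lit) : R :=
  if Nat.eqb (PP X) (LL X) then
    (if snd u then (if chi (leaf_list X) (fst u) then 0 else 1) else 0) else 0.

Lemma out_ins X Y l1 l2 u : lits_lt n (leaf_list X) -> (fst u < n)%nat ->
  leaf_list X = l1 ++ l2 -> leaf_list Y = l1 ++ u :: l2 ->
  gX (select w X Y) <= gX X - (G (n - PP X) - G (n - PP X - 1)) * mgain X u.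
Proof.
  intros HX Hu EX EY.
  assert (HY : lits_lt n (leaf_list Y)) by (rewrite EY; rewrite EX in HX; apply (lits_ins n); auto).
  pose proof (P_le_n n _ HY). fold (PP Y) in H.
  unfold mgain. destruct (Nat.eqb (PP X) (LL X)) eqn:E1;
   [destruct u as [i [|]]; simpl snd; simpl fst in *; [destruct (chi (leaf_list X) i) eqn:E2|]|].
  all: rewrite ?Rmult_0_r, ?Rminus_0_r.
  2: { apply Nat.eqb_eq in E1.
       pose proof (ins_gain n w wpos X Y l1 l2 i HX Hu EX EY E2 E1) as Hs.
       destruct (acc_ins n w wpos X Y l1 l2 (i, true) HX Hu EX EY Hs) as [B1 B2].
       rewrite Hs. unfold gX, gL. fold (PP X) (PP Y) (LL X) (LL Y).
       replace (LL Y - PP Y)%nat with (LL X - PP X)%nat by lia.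
       replace (n - PP Y)%nat with (n - PP X - 1)%nat by lia. lra. }
  all: destruct (select_cases w X Y) as [H3|[H3 _]]; rewrite H3; try lra.
  all: first [ destruct (acc_ins n w wpos X Y l1 l2 _ HX Hu EX EY H3) as [B1 B2]
             | destruct (acc_ins n w wpos X Y l1 l2 (i, false) HX Hu EX EY H3) as [B1 B2]
             | destruct (acc_ins n w wpos X Y l1 l2 (i, true) HX Hu EX EY H3) as [B1 B2] ].
  all: apply gX_mono; lia.
Qed.

End Pot.

Lemma terms_in n u : In u (terminals n) -> (fst u < n)%nat.
Proof.
  unfold terminals. intros H. apply in_flat_map in H. destruct H as (i & Hi & Hu).
  apply in_seq in Hi. simpl in Hu. destruct Hu as [<-|[<-|[]]]; simpl; lia.
Qed.

Lemma lsum_terms n (h : lit -> R) : lsum (terminals n) h = lsum (seq 0 n) (fun i => h (i, true) + h (i, false)).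
Proof. unfold terminals. rewrite lsum_flat_map. apply lsum_ext. intros. unfold lsum; simpl. lra. Qed.

Lemma lsum_terms_const n c : lsum (terminals n) (fun _ => c) = 2 * INR n * c.
Proof. rewrite lsum_terms, lsum_const, length_seq. lra. Qed.

Lemma lsum_bool (h : bool -> R) : lsum [true; false] h = h true + h false.
Proof. unfold lsum; simpl; lra. Qed.

Definition Ex (d : list (R * stree)) (phi : stree -> R) : R := lsum d (fun q => fst q * phi (snd q)).

Section Dist.
Variable n : nat.
Hypothesis n1 : (1 <= n)%nat.
Variable w : nat -> R.
Hypothesis wpos : forall i, (i < n)%nat -> 0 < w i.

Definition phi (X Y : stree) := gX n (select w X Y).

Lemma INR2n : INR (2 * n) = 2 * INR n.
Proof. rewrite mult_INR; simpl; lra. Qed.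

Lemma sub_bound X : lits_lt n (leaf_list X) -> Ex (substitute_dist n X) (phi X) <= gX n X.
Proof.
  intros HX. unfold Ex, phi. destruct X as [t|].
  - unfold substitute_dist. rewrite lsum_flat_map.
    set (p := / (INR (nleaves t) * INR (2 * n))).
    assert (Hp : 0 < p).
    { unfold p. apply Rinv_0_lt_compat. pose proof (nleaves_pos t).
      apply Rmult_lt_0_compat; apply lt_0_INR; lia. }
    apply Rle_trans with (lsum (seq 0 (nleaves t)) (fun _ => lsum (terminals n) (fun _ => p * gX n (Some t)))).
    + apply lsum_le. intros j Hj. apply in_seq in Hj. rewrite lsum_map. apply lsum_le.
      intros u Hu. simpl fst; simpl snd. apply Rmult_le_compat_l; [lra|].
      destruct (replace_split t j u) as (l1 & a & l2 & E1 & E2); [lia|].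
      apply (out_sub n n1 w wpos (Some t) _ l1 a l2 u); auto. apply (terms_in n u Hu).
    + rewrite lsum_terms_const, lsum_const, length_seq. unfold p. rewrite INR2n.
      pose proof (nleaves_pos t). assert (0 < INR (nleaves t)) by (apply lt_0_INR; lia).
      pose proof INR_n_pos n n1.
      right. field. lra.
  - simpl. unfold lsum; simpl. rewrite select_self. lra.
Qed.

Lemma ins_bound X : lits_lt n (leaf_list X) ->
  Ex (insert_dist n X) (phi X) <=
    gX n X - (G n (n - PP X) - G n (n - PP X - 1)) * lsum (terminals n) (mgain X) / (2 * INR n).
Proof.
  intros HX. unfold Ex, phi. set (D := G n (n - PP X) - G n (n - PP X - 1)).
  pose proof (INR_n_pos n n1).
  assert (Hterm : lsum (terminals n) (fun u => gX n X - D * mgain X u)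
                  = 2 * INR n * gX n X - D * lsum (terminals n) (mgain X)).
  { rewrite (lsum_ext _ _ (fun u => gX n X + (- D) * mgain X u)) by (intros; lra).
    rewrite lsum_plus, lsum_scal, lsum_terms_const. lra. }
  destruct X as [t|].
  - unfold insert_dist. rewrite lsum_flat_map.
    set (p := / (INR (tsize t) * INR (2 * n) * 2)).
    assert (Hs : 0 < INR (tsize t)) by (apply lt_0_INR; rewrite tsize_leaves; pose proof (nleaves_pos t); lia).
    assert (Hp : 0 < p).
    { unfold p. apply Rinv_0_lt_compat. rewrite INR2n. nra. }
    apply Rle_trans with (lsum (seq 0 (tsize t)) (fun _ => lsum (terminals n)
                            (fun u => 2 * p * (gX n (Some t) - D * mgain (Some t) u)))).
    + apply lsum_le. intros k Hk. rewrite lsum_flat_map. apply lsum_le.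
      intros u Hu. rewrite lsum_map, lsum_bool. simpl fst; simpl snd.
      destruct (insert_split t k u true) as (l1 & l2 & E1 & E2).
      destruct (insert_split t k u false) as (m1 & m2 & F1 & F2).
      pose proof (out_ins n n1 w wpos (Some t) (Some (insert_at t k u true)) l1 l2 u HX (terms_in n u Hu) E1 E2).
      pose proof (out_ins n n1 w wpos (Some t) (Some (insert_at t k u false)) m1 m2 u HX (terms_in n u Hu) F1 F2).
      fold D in H0, H1. nra.
    + rewrite lsum_const, length_seq. rewrite lsum_scal, Hterm. unfold p. rewrite INR2n.
      right. field. lra.
  - unfold insert_dist. rewrite lsum_map. simpl fst; simpl snd.
    apply Rle_trans with (lsum (terminals n) (fun u => / INR (2 * n) * (gX n None - D * mgain None u))).
    + apply lsum_le. intros u Hu. apply Rmult_le_compat_l.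
      * left; apply Rinv_0_lt_compat; rewrite INR2n; lra.
      * apply (out_ins n n1 w wpos None (Some (Leaf u)) [] [] u HX (terms_in n u Hu)); auto.
    + rewrite lsum_scal, Hterm, INR2n. right. field. lra.
Qed.

Lemma del_bound X : lits_lt n (leaf_list X) -> (1 <= LL X)%nat ->
  Ex (delete_dist X) (phi X) <=
    gX n X - (F n (LL X - PP X) - F n (LL X - PP X - 1)) * INR (LL X - PP X) / INR (LL X).
Proof.
  intros HX HL. unfold Ex, phi. set (D := F n (LL X - PP X) - F n (LL X - PP X - 1)).
  assert (HD : 0 <= D) by (unfold D; pose proof (F_mono n n1 (LL X - PP X - 1) (LL X - PP X) ltac:(lia)); lra).
  destruct X as [t|]; [|unfold LL in HL; simpl in HL; lia].
  unfold delete_dist. rewrite lsum_map. simpl fst; simpl snd.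
  assert (HLt : LL (Some t) = nleaves t) by (unfold LL; simpl; rewrite nleaves_len; auto).
  rewrite HLt in *.
  assert (Hl : 0 < INR (nleaves t)) by (apply lt_0_INR; lia).
  apply Rle_trans with (lsum (seq 0 (nleaves t)) (fun j => / INR (nleaves t) *
                          (gX n (Some t) - D * (1 - badind [] (leaves t) j)))).
  - apply lsum_le. intros j Hj. apply in_seq in Hj. apply Rmult_le_compat_l; [left; apply Rinv_0_lt_compat; lra|].
    assert (Hj' : (j < length (leaves t))%nat) by (rewrite <- nleaves_len; lia).
    destruct (remove_nth_split j (leaves t) Hj') as (l1 & a & l2 & E1 & E2).
    pose proof (delete_leaves t j ltac:(lia)) as E3. rewrite E2 in E3.
    pose proof (out_del n n1 w wpos (Some t) (delete_leaf t j) l1 a l2 HX E1 E3) as H.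
    rewrite HLt in H. fold D in H. eapply Rle_trans; [exact H|].
    unfold badind. unfold PP in *. simpl leaf_list in *.
    rewrite <- delete_leaves by lia.
    destruct (Nat.leb (Pc [] (leaves t)) (Pc [] (leaf_list (delete_leaf t j)))) eqn:E.
    + apply Nat.leb_le in E. rewrite (proj2 (Nat.ltb_ge _ _)) by lia. unfold D, LL, PP; simpl leaf_list; rewrite <- nleaves_len; lra.
    + apply Nat.leb_gt in E. rewrite (proj2 (Nat.ltb_lt _ _)) by lia. unfold D, LL, PP; simpl leaf_list; rewrite <- nleaves_len; lra.
  - rewrite lsum_scal.
    rewrite (lsum_ext _ _ (fun j => (gX n (Some t) - D) + D * badind [] (leaves t) j)) by (intros; lra).
    rewrite lsum_plus, lsum_scal, lsum_const, length_seq.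
    pose proof (cntbad_le [] (leaves t)) as Hc. rewrite <- nleaves_len in Hc.
    unfold PP. simpl leaf_list.
    assert (Hle : (Pc [] (leaves t) <= nleaves t)%nat) by (rewrite nleaves_len; apply Pc_le_len).
    rewrite minus_INR by auto.
    apply Rle_trans with (/ INR (nleaves t) * (INR (nleaves t) * (gX n (Some t) - D) + D * INR (Pc [] (leaves t)))).
    + apply Rmult_le_compat_l; [left; apply Rinv_0_lt_compat; lra|]. nra.
    + right. field. lra.
Qed.

End Dist.

Section Main.
Variable n : nat.
Hypothesis n1 : (1 <= n)%nat.
Variable w : nat -> R.
Hypothesis wpos : forall i, (i < n)%nat -> 0 < w i.

Lemma mgain_sum X : lits_lt n (leaf_list X) ->
  lsum (terminals n) (mgain X) = if Nat.eqb (PP X) (LL X) then INR (n - PP X) else 0.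
Proof.
  intros HX. rewrite lsum_terms. unfold mgain. simpl fst; simpl snd.
  destruct (Nat.eqb (PP X) (LL X)).
  - rewrite (lsum_ext _ _ (fun i => 1 - b2R (chi (leaf_list X) i))).
    + rewrite lsum_seq_sumR.
      rewrite (sumR_ext n _ (fun i => 1 + (-1) * b2R (chi (leaf_list X) i))) by (intros; lra).
      rewrite sumR_plus, sumR_const.
      assert (Hs : forall m (f : nat -> R), sumR m (fun i => -1 * f i) = - sumR m f).
      { induction m; intros; simpl; [lra|]. rewrite IHm; lra. }
      rewrite Hs. rewrite <- (P_sum n) by auto. rewrite minus_INR by (apply P_le_n; auto).
      unfold PP. lra.
    + intros i _. destruct (chi (leaf_list X) i); unfold b2R; lra.
  - rewrite (lsum_ext _ _ (fun _ => 0)) by (intros; lra). rewrite lsum_const; lra.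
Qed.

Lemma Ex_scale p d f : Ex (scale p d) f = p * Ex d f.
Proof. unfold Ex, scale. rewrite lsum_map, <- lsum_scal. apply lsum_ext. intros; simpl; lra. Qed.

Lemma Ex_mutate X f : Ex (mutate_dist n X) f =
  / 3 * (Ex (substitute_dist n X) f + Ex (insert_dist n X) f + Ex (delete_dist X) f).
Proof. unfold mutate_dist. unfold Ex at 1. rewrite !lsum_app. fold (Ex (scale (/3) (substitute_dist n X)) f).
  fold (Ex (scale (/3) (insert_dist n X)) f). fold (Ex (scale (/3) (delete_dist X)) f).
  rewrite !Ex_scale. lra. Qed.

Lemma del_bound0 X : lits_lt n (leaf_list X) -> Ex (delete_dist X) (phi n w X) <= gX n X.
Proof.
  intros HX. destruct X as [t|].
  - pose proof (del_bound n n1 w wpos (Some t) HX) as H.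
    assert (HL : (1 <= LL (Some t))%nat) by (unfold LL; simpl; rewrite <- nleaves_len; apply nleaves_pos).
    specialize (H HL).
    pose proof (F_mono n n1 (LL (Some t) - PP (Some t) - 1) (LL (Some t) - PP (Some t)) ltac:(lia)).
    assert (0 <= INR (LL (Some t) - PP (Some t)) / INR (LL (Some t))).
    { unfold Rdiv. apply Rmult_le_pos. apply pos_INR. left; apply Rinv_0_lt_compat, lt_0_INR; lia. }
    unfold Rdiv in *. nra.
  - unfold Ex, phi; simpl. unfold lsum; simpl. rewrite select_self. lra.
Qed.

Lemma opt_of X : lits_lt n (leaf_list X) -> PP X = n -> LL X = n -> optimal n w X.
Proof.
  intros HX HP HL.
  assert (Hall : forall v, (v < n)%nat -> chi (leaf_list X) v = true).
  { intros v Hv. destruct (chi (leaf_list X) v) eqn:E; auto. exfalso.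
    pose proof (P_sum n _ HX) as Hs. fold (PP X) in Hs. rewrite HP in Hs.
    rewrite (sumR_point n _ (fun u => if Nat.eqb u v then 1 else b2R (chi (leaf_list X) u)) v Hv) in Hs.
    - rewrite E, Nat.eqb_refl in Hs. change (b2R false) with 0 in Hs.
      assert (sumR n (fun u => if Nat.eqb u v then 1 else b2R (chi (leaf_list X) u)) <= INR n).
      { rewrite <- (Rmult_1_r (INR n)), <- sumR_const. apply sumR_le. intros.
        destruct (Nat.eqb v0 v); [lra|]. unfold b2R; destruct (chi (leaf_list X) v0); lra. }
      lra.
    - intros u Hu. rewrite (proj2 (Nat.eqb_neq u v) Hu). auto. }
  assert (HWX : WORDER w X = sumR n w).
  { unfold WORDER. rewrite (W_sum n) by auto. apply sumR_ext. intros v Hv. rewrite Hall by auto. unfold b2R; lra. }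
  assert (HWY : forall Y, wf n Y -> WORDER w Y <= sumR n w /\
              (WORDER w Y = sumR n w -> forall v, (v < n)%nat -> chi (leaf_list Y) v = true)).
  { intros Y HY. unfold WORDER. rewrite (W_sum n) by exact HY. split.
    - apply sumR_le. intros v Hv. pose proof (wpos v Hv). unfold b2R; destruct (chi _ _); lra.
    - intros Heq v Hv. destruct (chi (leaf_list Y) v) eqn:E; auto. exfalso.
      rewrite (sumR_point n _ (fun u => if Nat.eqb u v then w v else w u * b2R (chi (leaf_list Y) u)) v Hv) in Heq.
      + rewrite E, Nat.eqb_refl in Heq. change (b2R false) with 0 in Heq.
        assert (sumR n (fun u => if Nat.eqb u v then w v else w u * b2R (chi (leaf_list Y) u)) <= sumR n w).
        { apply sumR_le. intros. destruct (Nat.eqb v0 v) eqn:E2; [apply Nat.eqb_eq in E2; subst; lra|].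
          pose proof (wpos v0 H). unfold b2R; destruct (chi (leaf_list Y) v0); lra. }
        pose proof (wpos v Hv). lra.
      + intros u Hu. rewrite (proj2 (Nat.eqb_neq u v) Hu). auto. }
  split.
  - intros Y HY. rewrite HWX. apply HWY; auto.
  - intros Y HY Heq. rewrite HWX in Heq. destruct (HWY Y HY) as [_ H2].
    specialize (H2 Heq).
    assert (INR (Pc [] (leaf_list Y)) = INR n).
    { rewrite (P_sum n) by exact HY. rewrite <- (Rmult_1_r (INR n)), <- sumR_const.
      apply sumR_ext. intros v Hv. rewrite H2 by auto. reflexivity. }
    apply INR_eq in H. pose proof (Pc_le_len [] (leaf_list Y)).
    rewrite !cplx_len. unfold LL in HL. lia.
Qed.

Lemma drift X : lits_lt n (leaf_list X) -> ~ optimal n w X ->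
  Ex (mutate_dist n X) (phi n w X) <= gX n X - 1.
Proof.
  intros HX Hno. rewrite Ex_mutate.
  pose proof (sub_bound n n1 w wpos X HX) as HS.
  pose proof (ins_bound n n1 w wpos X HX) as HI.
  pose proof (del_bound0 X HX) as HD.
  pose proof (mgain_sum X HX) as Hm.
  pose proof (INR_n_pos n n1) as Hn.
  pose proof (Pc_le_len [] (leaf_list X)) as HPL. fold (PP X) (LL X) in HPL.
  pose proof (P_le_n n _ HX) as HPn. fold (PP X) in HPn.
  set (Dk := G n (n - PP X) - G n (n - PP X - 1)) in *.
  assert (HDk : 0 <= Dk) by (unfold Dk; pose proof (G_mono n n1 (n - PP X - 1) (n - PP X) ltac:(lia)); lra).
  destruct (Nat.eq_dec (LL X - PP X) 0) as [Hb|Hb].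
  - assert (E : Nat.eqb (PP X) (LL X) = true) by (apply Nat.eqb_eq; lia).
    rewrite E in Hm. rewrite Hm in HI.
    destruct (Nat.eq_dec (n - PP X) 0) as [Hk|Hk].
    + exfalso. apply Hno. apply opt_of; auto; lia.
    + pose proof (G_step n n1 (n - PP X) ltac:(lia)) as Hst. fold Dk in Hst.
      assert (Hkp : 0 < INR (n - PP X)) by (apply lt_0_INR; lia).
      assert (Dk * INR (n - PP X) / (2 * INR n) >= 3).
      { assert (Dk * INR (n - PP X) >= 6 * INR n).
        { apply Rle_ge. apply Rle_trans with ((6 * INR n / INR (n - PP X)) * INR (n - PP X)).
          right; field; lra. apply Rmult_le_compat_r; lra. }
        apply Rle_ge. unfold Rdiv. apply Rle_trans with (6 * INR n * / (2 * INR n)).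
        right; field; lra. apply Rmult_le_compat_r; [left; apply Rinv_0_lt_compat; lra | lra]. }
      lra.
  - assert (HL : (1 <= LL X)%nat) by lia.
    pose proof (del_bound n n1 w wpos X HX HL) as HD2.
    pose proof (F_step n n1 (LL X - PP X) ltac:(lia)) as Hst.
    set (Db := F n (LL X - PP X) - F n (LL X - PP X - 1)) in *.
    assert (Hbp : 0 < INR (LL X - PP X)) by (apply lt_0_INR; lia).
    assert (HLp : 0 < INR (LL X)) by (apply lt_0_INR; lia).
    assert (HLb : INR (LL X) <= INR (LL X - PP X) + INR n).
    { rewrite <- plus_INR. apply le_INR. lia. }
    assert (Db * INR (LL X - PP X) / INR (LL X) >= 3).
    { assert (Db * INR (LL X - PP X) >= 3 * INR (LL X - PP X) + 3 * INR n).
      { apply Rle_ge. apply Rle_trans with ((3 + 3 * INR n / INR (LL X - PP X)) * INR (LL X - PP X)).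
        right; field; lra. apply Rmult_le_compat_r; lra. }
      apply Rle_ge. unfold Rdiv. apply Rle_trans with (3 * INR (LL X) * / INR (LL X)).
      right; field; lra. apply Rmult_le_compat_r; [left; apply Rinv_0_lt_compat; lra | lra]. }
    assert (0 <= Dk * lsum (terminals n) (mgain X) / (2 * INR n)).
    { rewrite Hm. unfold Rdiv. apply Rmult_le_pos; [apply Rmult_le_pos; auto; destruct (Nat.eqb _ _); [apply pos_INR|lra]|].
      left; apply Rinv_0_lt_compat; lra. }
    lra.
Qed.
End Main.

Section Fin.
Variable n : nat.
Hypothesis n1 : (1 <= n)%nat.
Variable w : nat -> R.
Hypothesis wpos : forall i, (i < n)%nat -> 0 < w i.

Lemma support X q : lits_lt n (leaf_list X) -> In q (mutate_dist n X) ->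
  0 <= fst q /\ lits_lt n (leaf_list (snd q)).
Proof.
  intros HX Hq. pose proof (INR_n_pos n n1) as Hn.
  assert (Hsc : forall p d, 0 <= p -> In q (scale p d) ->
            (forall q', In q' d -> 0 <= fst q' /\ lits_lt n (leaf_list (snd q'))) ->
            0 <= fst q /\ lits_lt n (leaf_list (snd q))).
  { intros p d Hp Hin Hd. unfold scale in Hin. apply in_map_iff in Hin.
    destruct Hin as (q' & <- & Hq'). destruct (Hd q' Hq'). simpl. split; auto. nra. }
  unfold mutate_dist in Hq. apply in_app_or in Hq. destruct Hq as [Hq|Hq];
    [|apply in_app_or in Hq; destruct Hq as [Hq|Hq]];
    (apply (Hsc (/3) _ ltac:(lra) Hq)); intros q' Hq'; destruct X as [t|].
  - unfold substitute_dist in Hq'. apply in_flat_map in Hq'. destruct Hq' as (j & Hj & Hq').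
    apply in_map_iff in Hq'. destruct Hq' as (u & <- & Hu). apply in_seq in Hj. cbn [fst snd]. split.
    + left. apply Rinv_0_lt_compat. rewrite INR2n. pose proof (nleaves_pos t).
      assert (0 < INR (nleaves t)) by (apply lt_0_INR; lia). nra.
    + destruct (replace_split t j u) as (l1 & a & l2 & E1 & E2); [lia|]. simpl leaf_list. rewrite E2.
      simpl in HX; rewrite E1 in HX. apply (lits_sub n l1 a l2); auto. apply (terms_in n u Hu).
  - simpl in Hq'. destruct Hq' as [<-|[]]. simpl. split; [lra|auto].
  - unfold insert_dist in Hq'. apply in_flat_map in Hq'. destruct Hq' as (k & Hk & Hq').
    apply in_flat_map in Hq'. destruct Hq' as (u & Hu & Hq').
    apply in_map_iff in Hq'. destruct Hq' as (f & <- & _). cbn [fst snd]. split.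
    + left. apply Rinv_0_lt_compat. rewrite INR2n.
      assert (0 < INR (tsize t)) by (apply lt_0_INR; rewrite tsize_leaves; pose proof (nleaves_pos t); lia). nra.
    + destruct (insert_split t k u f) as (l1 & l2 & E1 & E2). simpl leaf_list. rewrite E2.
      simpl in HX; rewrite E1 in HX. apply (lits_ins n); auto. apply (terms_in n u Hu).
  - unfold insert_dist in Hq'. apply in_map_iff in Hq'. destruct Hq' as (u & <- & Hu). cbn [fst snd]. split.
    + left. apply Rinv_0_lt_compat. rewrite INR2n. lra.
    + intros a [<-|[]]. apply (terms_in n u Hu).
  - unfold delete_dist in Hq'. apply in_map_iff in Hq'. destruct Hq' as (j & <- & Hj). apply in_seq in Hj.
    simpl. split.
    + left. apply Rinv_0_lt_compat, lt_0_INR. lia.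
    + rewrite delete_leaves by lia.
      assert (Hj' : (j < length (leaves t))%nat) by (rewrite <- nleaves_len; lia).
      destruct (remove_nth_split j (leaves t) Hj') as (l1 & a & l2 & E1 & E2). rewrite E2.
      simpl in HX; rewrite E1 in HX. apply (lits_del n l1 a l2); auto.
  - simpl in Hq'. destruct Hq' as [<-|[]]. simpl. split; [lra|auto].
Qed.

Lemma lits_select X Y : lits_lt n (leaf_list X) -> lits_lt n (leaf_list Y) ->
  lits_lt n (leaf_list (select w X Y)).
Proof. intros. destruct (select_cases w X Y) as [H1|[H1 _]]; rewrite H1; auto. Qed.

Lemma nop_opt t X : optimal n w X -> not_opt_prob n w t X = 0.
Proof. intros H. destruct t; simpl; destruct (excluded_middle_informative (optimal n w X)); auto; contradiction. Qed.

Lemma nop_0 X : ~ optimal n w X -> not_opt_prob n w 0 X = 1.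
Proof. intros H. simpl; destruct (excluded_middle_informative (optimal n w X)); auto; contradiction. Qed.

Lemma nop_S t X : ~ optimal n w X -> not_opt_prob n w (S t) X =
  lsum (mutate_dist n X) (fun q => fst q * not_opt_prob n w t (select w X (snd q))).
Proof. intros H. simpl; destruct (excluded_middle_informative (optimal n w X)); [contradiction|reflexivity]. Qed.

Lemma etp_lsum X N : expected_time_partial n w X N = lsum (seq 0 N) (fun t => not_opt_prob n w t X).
Proof. unfold expected_time_partial. generalize (seq 0 N). induction l; simpl; auto.
  unfold lsum in *; simpl; rewrite IHl; auto. Qed.

Lemma etp_bound N : forall X, lits_lt n (leaf_list X) -> expected_time_partial n w X N <= gX n X.
Proof.
  induction N; intros X HX.
  - rewrite etp_lsum. unfold lsum; simpl. apply gX_nonneg; auto.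
  - rewrite etp_lsum, lsum_seq_S.
    destruct (excluded_middle_informative (optimal n w X)) as [Ho|Ho].
    + rewrite nop_opt by auto. rewrite (lsum_ext _ _ (fun _ => 0)) by (intros; apply nop_opt; auto).
      rewrite lsum_const. pose proof (gX_nonneg n n1 X). lra.
    + rewrite nop_0 by auto.
      rewrite (lsum_ext _ _ (fun t => lsum (mutate_dist n X)
                 (fun q => fst q * not_opt_prob n w t (select w X (snd q))))) by (intros; apply nop_S; auto).
      rewrite lsum_swap.
      rewrite (lsum_ext _ _ (fun q => fst q * expected_time_partial n w (select w X (snd q)) N)).
      2: { intros q _. rewrite etp_lsum, <- lsum_scal. reflexivity. }
      apply Rle_trans with (1 + Ex (mutate_dist n X) (phi n w X)).
      * apply Rplus_le_compat_l. unfold Ex, phi. apply lsum_le. intros q Hq.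
        destruct (support X q HX Hq) as [H1 H2]. apply Rmult_le_compat_l; auto.
        apply IHN. apply lits_select; auto.
      * pose proof (drift n n1 w wpos X HX Ho). lra.
Qed.

Lemma g_bound X : lits_lt n (leaf_list X) ->
  gX n X <= 18 * (INR (cplx X) + INR n * ln (INR n) + 1).
Proof.
  intros HX. pose proof (INR_n_pos n n1) as Hn.
  assert (Hlnn : 0 <= ln (INR n)) by (apply ln_ge0; lra).
  assert (Hnl : INR n <= INR n * ln (INR n) + 1).
  { pose proof (ln_le_xm1 (/ INR n) ltac:(apply Rinv_0_lt_compat; lra)).
    rewrite ln_Rinv in H by lra.
    assert (INR n * (/ INR n - 1) = 1 - INR n) by (field; lra). nra. }
  assert (HLc : INR (LL X) <= INR (cplx X)) by (apply le_INR; rewrite cplx_len; unfold LL; lia).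
  pose proof (Pc_le_len [] (leaf_list X)) as HPL. fold (PP X) (LL X) in HPL.
  pose proof (P_le_n n _ HX) as HPn. fold (PP X) in HPn.
  unfold gX, gL. fold (PP X) (LL X).
  assert (HF : F n (LL X - PP X) <= 6 * INR (LL X) + 3 * INR n + 3 * INR n * ln (INR n)).
  { destruct (LL X - PP X)%nat as [|b] eqn:Eb.
    - rewrite F_0. pose proof (pos_INR (LL X)). nra.
    - rewrite F_S. assert (Hb : INR (S b) <= INR (LL X)) by (apply le_INR; lia).
      assert (Hb0 : 0 < INR (S b)) by (apply lt_0_INR; lia).
      pose proof (ln_le_xm1 (INR (S b) / INR n) ltac:(apply Rdiv_lt_0_compat; lra)).
      unfold Rdiv in H. rewrite ln_mult, ln_Rinv in H by (try apply Rinv_0_lt_compat; lra).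
      assert (INR n * (INR (S b) * / INR n - 1) = INR (S b) - INR n) by (field; lra).
      assert (INR n * ln (INR (S b)) <= INR n * ln (INR n) + INR (S b)) by nra.
      nra. }
  assert (HG : G n (n - PP X) <= 6 * INR n + 6 * INR n * ln (INR n)).
  { destruct (n - PP X)%nat as [|k] eqn:Ek.
    - rewrite G_0. nra.
    - rewrite G_S. assert (INR (S k) <= INR n) by (apply le_INR; lia).
      pose proof (ln_mono (INR (S k)) (INR n) ltac:(apply lt_0_INR; lia) H). nra. }
  pose proof (pos_INR (cplx X)). lra.
Qed.

End Fin.

Theorem theorem2 :
  exists c : R, 0 < c /\
    forall (n : nat) (w : nat -> R) (X0 : stree),
      (1 <= n)%nat -> weights_ok n w -> wf n X0 ->
      forall N : nat,
        expected_time_partial n w X0 N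
          <= c * (INR (cplx X0) + INR n * ln (INR n) + 1).
Proof.
  exists 18. split; [lra|]. intros n w X0 Hn [_ Hw] HX N.
  eapply Rle_trans.
  - apply (etp_bound n Hn w Hw N X0 HX).
  - apply (g_bound n Hn X0 HX).
Qed.
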